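(* Let $U$ be a complete two-phase quantum walk. Then $U$ is unitary equivalent to \begin{align*} U_{r_+,r_-,\sigma_1,\sigma_2}={}&\sum_{n\ge0}|e_1^{n-1}\rangle\langle r_+e_1^n+s_+e_2^n|+|e_2^{n+1}\rangle\langle -e^{i\sigma_1}s_+e_1^n+e^{i\sigma_1}r_+e_2^n|\\ &+\sum_{n\le-1}|e_1^{n-1}\rangle\langle r_-e_1^n+e^{i\sigma_2}s_-e_2^n|+|e_2^{n+1}\rangle\langle -s_-e_1^n+e^{i\sigma_2}r_-e_2^n| \end{align*} for some $0\le r_+,r_-\le1$ and $\sigma_1,\sigma_2\in\mathbb R$, where $s_\varepsilon=\sqrt{1-r_\varepsilon^2}$ ($\varepsilon=+,-$). Moreover, writing $U_{r,\sigma}=U_{r_+,r_-,\sigma_1,\sigma_2}$, if $0<r_\varepsilon,r'_\varepsilon<1$ and $\sigma_i,\sigma'_i\in[0,2\pi)$, then $U_{r,\sigma}$ and $U_{r',\sigma'}$ are unitary equivalent if and only if $r=r'$ and $\sigma=\sigma'$.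
   Context: Let $\mathcal H_n=\mathbb C^2$ for $n\in\mathbb Z$, $\mathcal H=\bigoplus_{n\in\mathbb Z}\mathcal H_n$, $P_n$ the orthogonal projection onto $\mathcal H_n$, and $\{e_1^n,e_2^n\}$ the standard basis of $\mathcal H_n$; each $\mathcal H_n$ is identified with $\mathbb C^2$. Dirac notation: $|x\rangle\langle y|$ is the operator $z\mapsto\langle y,z\rangle x$ (inner product conjugate-linear in the first argument). A one-dimensional quantum walk is a unitary $U$ on $\mathcal H$ with $\operatorname{rank}(P_nUP_m)=1$ if $m=n\pm1$ and $0$ otherwise. Every such $U$ can be written as $U=\sum_{n\in\mathbb Z}|\xi_{n-1,n}\rangle\langle\zeta_{n-1,n}|+|\xi_{n+1,n}\rangle\langle\zeta_{n+1,n}|$, where $\{\xi_{n,n+1},\xi_{n+1,n}\}_{n}$ and $\{\zeta_{n,n+1},\zeta_{n+1,n}\}_{n}$ are orthonormal bases of $\mathcal H$ with $\xi_{n,n+1},\zeta_{n+1,n}\in\mathcal H_n$ and $\xi_{n+1,n},\zeta_{n,n+1}\in\mathcal H_{n+1}$. $U$ is a complete two-phase quantum walk if it has such a representation for which there exist $\xi_1^\pm,\xi_2^\pm,\zeta_1^\pm,\zeta_2^\pm\in\mathbb C^2$ with $\xi_{n,n+1}=\xi_1^+$, $\xi_{n,n-1}=\xi_2^+$, $\zeta_{n-1,n}=\zeta_1^+$, $\zeta_{n+1,n}=\zeta_2^+$ for all $n\ge0$, and $\xi_{n,n+1}=\xi_1^-$, $\xi_{n,n-1}=\xi_2^-$,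 $\zeta_{n-1,n}=\zeta_1^-$, $\zeta_{n+1,n}=\zeta_2^-$ for all $n\le-1$. Since $U$ and $e^{i\lambda}U$ are identified, unitaries $U_1,U_2$ on $\mathcal H$ are called unitary equivalent if there exist $\lambda\in\mathbb R$ and a unitary $W=\bigoplus_nW_n$ ($W_n$ unitary on $\mathcal H_n$) with $e^{i\lambda}WU_1W^*=U_2$. *)

(* Defs.v *)
From HB Require Import structures.
From mathcomp Require Import all_boot all_order all_algebra.
From mathcomp Require Import reals trigo.
From mathcomp Require Import complex.
Set Implicit Arguments. Unset Strict Implicit. Unset Printing Implicit Defensive.
Import Order.TTheory GRing.Theory Num.Theory.
Local Open Scope ring_scope.

Section QW.
Variable R : realType.
Local Notation C := R[i].

Definition vec2 (a b : C) : 'cV[C]_2 := \col_(i < 2) (if i == ord0 then a else b).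
Definition e1 : 'cV[C]_2 := vec2 1 0.
Definition e2 : 'cV[C]_2 := vec2 0 1.

Definition adjmx m n (A : 'M[C]_(m, n)) : 'M[C]_(n, m) := (map_mx (@conjc R) A)^T.

(* |x><y| on C^2 (inner product conjugate-linear in the first argument) *)
Definition ketbra (x y : 'cV[C]_2) : 'M[C]_2 := x *m adjmx y.

Definition expi (t : R) : C := Complex (cos t) (sin t).
Definition rC (x : R) : C := Complex x 0.

Definition unitary2 (W : 'M[C]_2) : Prop := adjmx W *m W = 1%:M /\ W *m adjmx W = 1%:M.

(* Operators on H = (+)_{n in Z} C^2 are represented by their blocks:
   K n m = P_n K P_m viewed as a 2x2 matrix, entries <e_i^n, K e_j^m>. *)
Definition blockop := int -> int -> 'M[C]_2.

Definition adjop (K : blockop) : blockop := fun n m => adjmx (K m n).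
Definition idop : blockop := fun n m => if n == m then 1%:M else 0.
(* product of block operators whose left factor has blocks only at |n-k| <= 1 *)
Definition comp1 (K L : blockop) : blockop :=
  fun n m => \sum_(k <- [:: n - 1; n; n + 1]) K n k *m L k m.

Definition quantum_walk (U : blockop) : Prop :=
  (forall n m : int, \rank (U n m) = (if (m == n + 1) || (m == n - 1) then 1%N else 0%N))
  /\ comp1 (adjop U) U = idop /\ comp1 U (adjop U) = idop.

Definition onb2 (u v : 'cV[C]_2) : Prop :=
  adjmx u *m u = 1%:M /\ adjmx v *m v = 1%:M /\ adjmx u *m v = 0.

(* Representation data: xi a b in H_a, zeta a b in H_b (for |a - b| = 1).
   {xi_{n,n+1}, xi_{n+1,n}}_n is an ONB of H with vectors xi_{n,n+1}, xi_{n,n-1}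
   lying in H_n, i.e. an ONB of each H_n; similarly zeta_{n+1,n}, zeta_{n-1,n} in H_n. *)
Definition qw_representation (U : blockop) (xi zeta : int -> int -> 'cV[C]_2) : Prop :=
  (forall n : int, onb2 (xi n (n + 1)) (xi n (n - 1)))
  /\ (forall n : int, onb2 (zeta (n - 1) n) (zeta (n + 1) n))
  /\ (forall n m : int, U n m =
        if n == m - 1 then ketbra (xi (m - 1) m) (zeta (m - 1) m)
        else if n == m + 1 then ketbra (xi (m + 1) m) (zeta (m + 1) m)
        else 0).

Definition complete_two_phase (U : blockop) : Prop :=
  quantum_walk U /\
  exists (xi zeta : int -> int -> 'cV[C]_2)
         (xi1p xi2p zeta1p zeta2p xi1m xi2m zeta1m zeta2m : 'cV[C]_2),
    qw_representation U xi zeta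
    /\ (forall n : int, 0 <= n ->
          [/\ xi n (n + 1) = xi1p, xi n (n - 1) = xi2p,
              zeta (n - 1) n = zeta1p & zeta (n + 1) n = zeta2p])
    /\ (forall n : int, n <= -1 ->
          [/\ xi n (n + 1) = xi1m, xi n (n - 1) = xi2m,
              zeta (n - 1) n = zeta1m & zeta (n + 1) n = zeta2m]).

Definition unitary_equiv (U1 U2 : blockop) : Prop :=
  exists (lam : R) (W : int -> 'M[C]_2),
    (forall n, unitary2 (W n)) /\
    forall n m : int, expi lam *: (W n *m U1 n m *m adjmx (W m)) = U2 n m.

Definition sfun (r : R) : R := Num.sqrt (1 - r ^+ 2).

Definition Uparam (rp rm s1 s2 : R) : blockop := fun n m =>
  if n == m - 1 then
    ketbra e1 (if 0 <= m then vec2 (rC rp) (rC (sfun rp))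
               else vec2 (rC rm) (expi s2 * rC (sfun rm)))
  else if n == m + 1 then
    ketbra e2 (if 0 <= m then vec2 (- (expi s1 * rC (sfun rp))) (expi s1 * rC rp)
               else vec2 (- rC (sfun rm)) (expi s2 * rC rm))
  else 0.

End QW.

(* Main.v *)
Require Import Defs.
From HB Require Import structures.
From mathcomp Require Import all_boot all_order all_algebra.
From mathcomp Require Import reals trigo.
From mathcomp Require Import complex.
From mathcomp Require Import ring lra zify.
Import Order.TTheory GRing.Theory Num.Theory.
Local Open Scope ring_scope.
Set Implicit Arguments. Unset Strict Implicit. Unset Printing Implicit Defensive.

Section L1.
Variable R : realType.
Local Notation C := R[i].

Lemma rCE (x : R) : rC x = (x%:C)%C :> C. Proof. by []. Qed.

Lemma conjM (x y : C) : conjc (x * y) = conjc x * conjc y. Proof. exact: rmorphM. Qed.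
Lemma conjD (x y : C) : conjc (x + y) = conjc x + conjc y. Proof. exact: rmorphD. Qed.
Lemma conjN (x : C) : conjc (- x) = - conjc x. Proof. exact: rmorphN. Qed.
Lemma conjB (x y : C) : conjc (x - y) = conjc x - conjc y. Proof. exact: rmorphB. Qed.
Lemma conjK (x : C) : conjc (conjc x) = x. Proof. exact: conjcK. Qed.

Lemma conj_rC (x : R) : conjc (rC x) = rC x.
Proof. by rewrite /rC /conjc oppr0. Qed.

Lemma conj_expi (t : R) : conjc (expi t) = expi (- t).
Proof. by rewrite /expi /conjc cosN sinN. Qed.

Lemma expiD (a b : R) : expi (a + b) = expi a * expi b.
Proof.
rewrite /expi cosD sinD; apply/eqP; rewrite eq_complex /=; apply/andP; split; apply/eqP; ring.
Qed.

Lemma expi0 : expi 0 = 1 :> C.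
Proof. by rewrite /expi cos0 sin0. Qed.

Lemma expiNK (t : R) : expi t * expi (- t) = 1.
Proof. by rewrite -expiD subrr expi0. Qed.

Lemma expi_eq (a b : R) : a = b -> expi a = expi b.
Proof. by move->. Qed.

Lemma rCM (x y : R) : rC (x * y) = rC x * rC y.
Proof. by rewrite !rCE rmorphM. Qed.

Lemma rC_inj (x y : R) : rC x = rC y -> x = y.
Proof. by case. Qed.

Lemma rC1 : rC 1 = 1 :> C. Proof. by []. Qed.
Lemma rC0 : rC 0 = 0 :> C. Proof. by []. Qed.

Lemma expi_neq0 t : expi t != 0 :> C.
Proof. apply/eqP=> h; have := expiNK t; rewrite h mul0r => /eqP; by rewrite eq_sym oner_eq0. Qed.

Lemma expi_inj_cs (a b : R) : expi a = expi b -> cos a = cos b /\ sin a = sin b.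
Proof. by case. Qed.

Lemma polar (z : C) : exists r a : R, 0 <= r /\ z = rC r * expi a.
Proof.
case: z => x y.
set r := Num.sqrt (x ^+ 2 + y ^+ 2).
have r0 : 0 <= r by apply: sqrtr_ge0.
have hs : 0 <= x ^+ 2 + y ^+ 2 by apply: addr_ge0; apply: sqr_ge0.
have rr : r ^+ 2 = x ^+ 2 + y ^+ 2 by rewrite sqr_sqrtr.
have [rz|rnz] := eqVneq r 0.
  have: x ^+ 2 + y ^+ 2 = 0 by rewrite -rr rz expr0n.
  move=> /eqP; rewrite paddr_eq0 ?sqr_ge0 // !sqrf_eq0 => /andP[/eqP-> /eqP->].
  by exists 0, 0; split => //; rewrite rC0 mul0r.
have rpos : 0 < r by rewrite lt_def rnz r0.
set c := x / r; set d := y / r.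
have cd : c ^+ 2 + d ^+ 2 = 1.
  by rewrite /c /d !expr_div_n -mulrDl -rr divff // sqrf_eq0.
have c1 : -1 <= c <= 1.
  have : c ^+ 2 <= 1 by rewrite -cd lerDl sqr_ge0.
  move=> h; apply/andP; split; nra.
have hcos : cos (acos c) = c by apply: acosK; rewrite in_itv.
have hsin : sin (acos c) = `|d|.
  by rewrite sin_acos // -cd addrC addKr sqrtr_sqr.
have xe : x = r * c by rewrite /c mulrC divfK.
have ye : y = r * d by rewrite /d mulrC divfK.
case: (lerP 0 d) => hd.
  exists r, (acos c); split => //.
  rewrite /rC /expi hcos hsin ger0_norm //.
  apply/eqP; rewrite eq_complex /=; apply/andP; split; apply/eqP; rewrite ?xe ?ye; ring.
exists r, (- acos c); split => //.
rewrite /rC /expi cosN sinN hcos hsin ltr0_norm //.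
apply/eqP; rewrite eq_complex /=; apply/andP; split; apply/eqP; rewrite ?xe ?ye; ring.
Qed.

End L1.

Section L2.
Variable R : realType.
Local Notation C := R[i].

Definition o1 : 'I_2 := @Ordinal 2 1 isT.

Lemma ord2P (i : 'I_2) : i = ord0 \/ i = o1.
Proof. case: i => [[|[|//]]] h; [left|right]; exact: val_inj. Qed.

Lemma sum2 (F : 'I_2 -> C) : \sum_i F i = F ord0 + F o1.
Proof.
rewrite big_ord_recl big_ord_recl big_ord0 addr0; congr (_ + F _).
exact: val_inj.
Qed.

Lemma sum1 (F : 'I_1 -> C) : \sum_i F i = F ord0.
Proof. by rewrite big_ord_recl big_ord0 addr0. Qed.

Lemma o1_neq0 : (o1 == ord0) = false. Proof. by []. Qed.

Lemma vec2E0 (a b : C) j : vec2 a b ord0 j = a.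
Proof. by rewrite mxE. Qed.
Lemma vec2E1 (a b : C) j : vec2 a b o1 j = b.
Proof. by rewrite mxE. Qed.

Lemma vec2_eta (x : 'cV[C]_2) : x = vec2 (x ord0 ord0) (x o1 ord0).
Proof.
apply/matrixP => i j; rewrite mxE (ord1 j).
by case: (ord2P i) => ->.
Qed.

Definition ip (p x : 'cV[C]_2) : C := \sum_(j < 2) conjc (p j ord0) * x j ord0.

Lemma ipE (p x : 'cV[C]_2) : (adjmx p *m x) ord0 ord0 = ip p x.
Proof. rewrite mxE; apply: eq_bigr => j _; by rewrite !mxE. Qed.

Lemma ip_vec2 (a b c d : C) : ip (vec2 a b) (vec2 c d) = conjc a * c + conjc b * d.
Proof. by rewrite /ip sum2 !vec2E0 !vec2E1. Qed.

Lemma ip_conj (p x : 'cV[C]_2) : ip x p = conjc (ip p x).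
Proof. rewrite /ip !sum2 conjD !conjM !conjK; ring. Qed.

Definition Fm (a b : C) (p q : 'cV[C]_2) : 'M[C]_2 :=
  \matrix_(i < 2, j < 2) (if i == ord0 then a * conjc (p j ord0) else b * conjc (q j ord0)).

Lemma Fm_mul a b p q (x : 'cV[C]_2) : Fm a b p q *m x = vec2 (a * ip p x) (b * ip q x).
Proof.
apply/matrixP => i j; rewrite (ord1 j) !mxE /ip.
case: (ord2P i) => ->; rewrite ?o1_neq0 /= mulr_sumr; apply: eq_bigr => k _; rewrite mxE /= ?mulrA //.
Qed.

Lemma adjmx_mul m n p (A : 'M[C]_(m, n)) (B : 'M[C]_(n, p)) :
  adjmx (A *m B) = adjmx B *m adjmx A.
Proof. by rewrite /adjmx map_mxM trmx_mul. Qed.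

Lemma ketbra_conj (A B : 'M[C]_2) (x y : 'cV[C]_2) :
  A *m ketbra x y *m adjmx B = ketbra (A *m x) (B *m y).
Proof. by rewrite /ketbra adjmx_mul !mulmxA. Qed.

Lemma scale_ketbra (c : C) (x y : 'cV[C]_2) : c *: ketbra x y = ketbra (c *: x) y.
Proof. by rewrite /ketbra scalemxAl. Qed.

Lemma scale_vec2 (c a b : C) : c *: vec2 a b = vec2 (c * a) (c * b).
Proof. apply/matrixP => i j; rewrite !mxE; by case: ifP. Qed.

Lemma ketbraE (a b c d : C) :
  ketbra (vec2 a b) (vec2 c d) =
  \matrix_(i < 2, j < 2) ((if i == ord0 then a else b) * conjc (if j == ord0 then c else d)).
Proof.
apply/matrixP => i j; rewrite !mxE sum1 !mxE.
by case: (i == ord0); case: (j == ord0).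
Qed.

Lemma ketbra_eq (a b c d a' b' c' d' : C) :
  a * conjc c = a' * conjc c' -> a * conjc d = a' * conjc d' ->
  b * conjc c = b' * conjc c' -> b * conjc d = b' * conjc d' ->
  ketbra (vec2 a b) (vec2 c d) = ketbra (vec2 a' b') (vec2 c' d').
Proof.
move=> h1 h2 h3 h4; rewrite !ketbraE; apply/matrixP => i j; rewrite !mxE.
by case: (ord2P i) => ->; case: (ord2P j) => ->.
Qed.

Lemma onb2_ip (u v : 'cV[C]_2) : onb2 u v ->
  [/\ ip u u = 1, ip v v = 1, ip u v = 0 & ip v u = 0].
Proof.
case=> h1 [h2 h3]; rewrite (ip_conj u v) -!ipE h1 h2 h3 !mxE /=.
split => //; exact: conjc0.
Qed.

Lemma Fm_unitary a b p q : onb2 p q -> a * conjc a = 1 -> b * conjc b = 1 ->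
  unitary2 (Fm a b p q).
Proof.
move=> /onb2_ip [h1 h2 h3 h4] ha hb.
have e : Fm a b p q *m adjmx (Fm a b p q) = 1%:M.
  apply/matrixP => i j; rewrite !mxE sum2 !mxE.
  have E1 : forall x y : 'cV[C]_2, ip x y = conjc (x ord0 ord0) * y ord0 ord0 + conjc (x o1 ord0) * y o1 ord0.
    by move=> x y; rewrite /ip sum2.
  move: h1 h2 h3 h4; rewrite !E1 => h1 h2 h3 h4.
  case: (ord2P i) => ->; case: (ord2P j) => -> /=; rewrite !conjM !conjK.
  - by rewrite -ha -[X in _ = X]mulr1 -h1; ring.
  - transitivity (a * conjc b * (conjc (p ord0 ord0) * q ord0 ord0 + conjc (p o1 ord0) * q o1 ord0)); first ring.
    by rewrite h3 mulr0.
  - transitivity (b * conjc a * (conjc (q ord0 ord0) * p ord0 ord0 + conjc (q o1 ord0) * p o1 ord0)); first ring.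
    by rewrite h4 mulr0.
  - by rewrite -hb -[X in _ = X]mulr1 -h2; ring.
split => //; exact: mulmx1C.
Qed.

Lemma parseval (p q x y : 'cV[C]_2) : onb2 p q ->
  ip x y = conjc (ip p x) * ip p y + conjc (ip q x) * ip q y.
Proof.
move=> h.
have [hU _] : unitary2 (Fm 1 1 p q) by apply: Fm_unitary => //; rewrite conjc1 mulr1.
rewrite -ipE.
have -> : adjmx x *m y = adjmx (Fm 1 1 p q *m x) *m (Fm 1 1 p q *m y).
  by rewrite adjmx_mul mulmxA -(mulmxA (adjmx x)) hU mulmx1.
by rewrite ipE !Fm_mul ip_vec2 !mul1r.
Qed.

End L2.

Section L3.
Variable R : realType.
Local Notation C := R[i].

Lemma rCD (x y : R) : rC (x + y) = rC x + rC y :> C.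
Proof. by rewrite !rCE rmorphD. Qed.
Lemma rCX (x : R) n : rC (x ^+ n) = rC x ^+ n :> C.
Proof. by rewrite !rCE rmorphXn. Qed.
Lemma rCN (x : R) : rC (- x) = - rC x :> C.
Proof. by rewrite !rCE rmorphN. Qed.

Lemma normsq_polar (r a : R) : conjc (rC r * expi a) * (rC r * expi a) = rC (r ^+ 2) :> C.
Proof.
rewrite conjM conj_rC conj_expi rCX.
transitivity (rC r ^+ 2 * (expi a * expi (- a))); first ring.
by rewrite expiNK mulr1.
Qed.

Lemma phase_nf (x y z1 z2 : C) :
  conjc x * x + conjc y * y = 1 -> conjc z1 * z1 + conjc z2 * z2 = 1 ->
  conjc x * z1 + conjc y * z2 = 0 ->
  exists r a b g : R, [/\ 0 <= r <= 1, x = rC r * expi a, y = rC (sfun r) * expi b,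
     z1 = - (expi g * rC (sfun r) * expi (- b)) & z2 = expi g * rC r * expi (- a)].
Proof.
move=> h1 h2 h3.
set mu := x * z2 - y * z1.
have e1 : z1 + mu * conjc y = x * (conjc x * z1 + conjc y * z2) + z1 * (1 - (conjc x * x + conjc y * y)).
  rewrite /mu; ring.
rewrite h3 h1 subrr !mulr0 addr0 in e1.
have hz1 : z1 = - (mu * conjc y) by apply/eqP; rewrite -addr_eq0 e1.
have e2 : z2 - mu * conjc x = y * (conjc x * z1 + conjc y * z2) + z2 * (1 - (conjc x * x + conjc y * y)).
  rewrite /mu; ring.
rewrite h3 h1 subrr !mulr0 addr0 in e2.
have hz2 : z2 = mu * conjc x by apply/eqP; rewrite -subr_eq0 e2.
have hmu : conjc mu * mu = 1.
  transitivity (conjc mu * mu * (conjc x * x + conjc y * y)); first by rewrite h1 mulr1.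
  rewrite -h2 hz1 hz2 !conjN !conjM !conjK; ring.
have [rx [a [rx0 ex]]] := polar x.
have [ry [b [ry0 ey]]] := polar y.
have [rm [g [rm0 em]]] := polar mu.
have hr : rx ^+ 2 + ry ^+ 2 = 1.
  by have := h1; rewrite ex ey !normsq_polar -rCD -rC1 => /rC_inj.
have hrm : rm = 1.
  have : rm ^+ 2 = 1 by have := hmu; rewrite em normsq_polar -rC1 => /rC_inj.
  move=> h; nra.
have hs : sfun rx = ry.
  by rewrite /sfun -hr addrAC subrr add0r sqrtr_sqr ger0_norm.
exists rx, a, b, g; split.
- apply/andP; split=> //; nra.
- exact: ex.
- by rewrite hs.
- by rewrite hz1 em hrm rC1 mul1r ey hs conjM conj_rC conj_expi mulrA.
- by rewrite hz2 em hrm rC1 mul1r ex conjM conj_rC conj_expi mulrA.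
Qed.

End L3.

Section L4.
Variable R : realType.
Local Notation C := R[i].

Lemma sinBpi (x : R) : sin (x - pi) = - sin x.
Proof. rewrite sinB sinpi cospi; ring. Qed.
Lemma cosBpi (x : R) : cos (x - pi) = - cos x.
Proof. rewrite cosB sinpi cospi; ring. Qed.

Lemma sin_lt0 (b : R) : pi < b < 2 * pi -> sin b < 0.
Proof.
move=> /andP[h1 h2].
have : 0 < sin (b - pi) by apply: sin_gt0_pi; apply/andP; split; lra.
rewrite sinBpi; lra.
Qed.

Lemma angle_inj (a b : R) : 0 <= a < 2 * pi -> 0 <= b < 2 * pi ->
  cos a = cos b -> sin a = sin b -> a = b.
Proof.
move=> /andP[a0 a1] /andP[b0 b1] hc hs.
have pi0 := @pi_gt0 R.
case: (lerP a pi) => ha; case: (lerP b pi) => hb.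
- by apply: cos_inj => //; rewrite in_itv /=; apply/andP; split.
- have : 0 <= sin a by apply: sin_ge0_pi; apply/andP; split.
  have : sin b < 0 by apply: sin_lt0; apply/andP; split.
  lra.
- have : 0 <= sin b by apply: sin_ge0_pi; apply/andP; split.
  have : sin a < 0 by apply: sin_lt0; apply/andP; split.
  lra.
- have : a - pi = b - pi.
    apply: cos_inj; rewrite ?in_itv /= ?cosBpi ?hc //; apply/andP; split; lra.
  lra.
Qed.

Definition tT (U : blockop R) (n : int) : C := \tr (U n (n + 1) *m U (n + 1) n).

Lemma equiv_tT (U1 U2 : blockop R) : unitary_equiv U1 U2 ->
  exists E : C, conjc E * E = 1 /\ forall n, tT U2 n = E ^+ 2 * tT U1 n.
Proof.
case=> lam [W [hW h]]; exists (expi lam); split.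
  by rewrite conj_expi mulrC expiNK.
move=> n; rewrite /tT -!h -scalemxAl -scalemxAr !scalerA mxtraceZ -expr2; congr (_ * _).
have e : W n *m U1 n (n + 1) *m adjmx (W (n + 1)) *m (W (n + 1) *m U1 (n + 1) n *m adjmx (W n))
   = W n *m (U1 n (n + 1) *m U1 (n + 1) n) *m adjmx (W n).
  by rewrite !mulmxA -(mulmxA _ (adjmx _)) (hW (n + 1)).1 mulmx1.
by rewrite e mxtrace_mulC !mulmxA (hW n).1 mul1mx.
Qed.

Lemma ord0_neq1 : (ord0 == o1) = false. Proof. by []. Qed.

Lemma tr_ketbra2 (a1 a2 b1 b2 c1 c2 d1 d2 : C) :
  \tr (ketbra (vec2 a1 a2) (vec2 b1 b2) *m ketbra (vec2 c1 c2) (vec2 d1 d2)) =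
  (conjc b1 * c1 + conjc b2 * c2) * (conjc d1 * a1 + conjc d2 * a2).
Proof.
rewrite !ketbraE /mxtrace sum2 !mxE !sum2 !mxE ?eqxx ?o1_neq0 ?ord0_neq1 /=; ring.
Qed.

Variables (rp rm s1 s2 : R).
Local Notation U := (Uparam rp rm s1 s2).

Lemma UP_up (m : int) : U (m - 1) m = ketbra (e1 R) (if 0 <= m then vec2 (rC rp) (rC (sfun rp))
               else vec2 (rC rm) (expi s2 * rC (sfun rm))).
Proof. by rewrite /Uparam eqxx. Qed.

Lemma UP_dn (m : int) : U (m + 1) m = ketbra (e2 R) (if 0 <= m then vec2 (- (expi s1 * rC (sfun rp))) (expi s1 * rC rp)
               else vec2 (- rC (sfun rm)) (expi s2 * rC rm)).
Proof.
rewrite /Uparam eqxx.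
have -> : (m + 1 == m - 1) = false by apply/negbTE; apply/eqP => h; lia.
by [].
Qed.

Lemma tT_U n : tT U n = if 0 <= n then - (rC (sfun rp ^+ 2) * expi (- s1))
   else if n == -1 then - rC (sfun rp * sfun rm) else - (rC (sfun rm ^+ 2) * expi (- s2)).
Proof.
rewrite /tT -{1}(addrK 1 n) UP_up UP_dn /e1 /e2.
case: (lerP 0 n) => hn.
  have -> : 0 <= n + 1 by lia.
  rewrite tr_ketbra2 ?conjN ?conjM ?conj_rC ?conj_expi ?conjc0 ?conjc1 rCX; ring.
case: (eqVneq n (-1)) => hn1.
  rewrite hn1 /= tr_ketbra2 ?conjN ?conjM ?conj_rC ?conj_expi ?conjc0 ?conjc1 rCM; ring.
have -> : (0 <= n + 1) = false by apply/negbTE; rewrite -ltNge; lia.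
rewrite tr_ketbra2 ?conjN ?conjM ?conj_rC ?conj_expi ?conjc0 ?conjc1 rCX; ring.
Qed.

End L4.

Section L5.
Variable R : realType.
Local Notation C := R[i].

Lemma conjX (x : C) n : conjc (x ^+ n) = conjc x ^+ n. Proof. exact: rmorphXn. Qed.

Lemma tT0 (rp rm s1 s2 : R) : tT (Uparam rp rm s1 s2) 0 = - (rC (sfun rp ^+ 2) * expi (- s1)).
Proof. by rewrite tT_U lexx. Qed.
Lemma tTm1 (rp rm s1 s2 : R) : tT (Uparam rp rm s1 s2) (-1) = - rC (sfun rp * sfun rm).
Proof. by rewrite tT_U. Qed.
Lemma tTm2 (rp rm s1 s2 : R) : tT (Uparam rp rm s1 s2) (-2) = - (rC (sfun rm ^+ 2) * expi (- s2)).
Proof. by rewrite tT_U. Qed.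

Lemma inv_eq (U1 U2 : blockop R) : unitary_equiv U1 U2 ->
  forall n m, tT U2 n * conjc (tT U2 m) = tT U1 n * conjc (tT U1 m).
Proof.
case/equiv_tT => E [hE ht] n m; rewrite !ht conjM conjX.
transitivity ((conjc E * E) ^+ 2 * (tT U1 n * conjc (tT U1 m))); first ring.
by rewrite hE expr1n mul1r.
Qed.

Lemma II1 (A t : R) : (- (rC A * expi t)) * conjc (- (rC A * expi t)) = rC (A ^+ 2) :> C.
Proof.
rewrite conjN conjM conj_rC conj_expi rCX.
transitivity (rC A ^+ 2 * (expi t * expi (- t))); first ring.
by rewrite expiNK mulr1.
Qed.

Lemma II2 (A B t : R) : (- (rC A * expi t)) * conjc (- rC B) = rC (A * B) * expi t :> C.
Proof. rewrite conjN conj_rC rCM; ring. Qed.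

Lemma II3 (A B t : R) : (- rC B) * conjc (- (rC A * expi t)) = rC (B * A) * expi (- t) :> C.
Proof. rewrite conjN conjM conj_rC conj_expi rCM; ring. Qed.

Lemma sfun_gt0 (r : R) : 0 < r < 1 -> 0 < sfun r.
Proof. move=> /andP[h1 h2]; rewrite /sfun sqrtr_gt0; nra. Qed.

Lemma sfun_inj (r r' : R) : 0 < r < 1 -> 0 < r' < 1 -> sfun r = sfun r' -> r = r'.
Proof.
move=> /andP[h1 h2] /andP[h1' h2'] h.
have : Num.sqrt (1 - r ^+ 2) ^+ 2 = Num.sqrt (1 - r' ^+ 2) ^+ 2 by rewrite -/(sfun r) h.
rewrite !sqr_sqrtr; nra.
Qed.

Lemma cancel_expi (K a b : R) : K != 0 -> rC K * expi a = rC K * expi b -> expi a = expi b.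
Proof.
move=> hK /mulfI; apply; apply/eqP => /rC_inj /eqP; exact/negP.
Qed.

Lemma expiN_inj (a b : R) : 0 <= a < 2 * pi -> 0 <= b < 2 * pi -> expi (- a) = expi (- b) -> a = b.
Proof.
move=> ha hb /expi_inj_cs [hc hs]; apply: angle_inj => //.
  by rewrite -cosN hc cosN.
by apply: oppr_inj; rewrite -!sinN.
Qed.

Lemma part2 (rp rm s1 s2 rp' rm' s1' s2' : R) :
     0 < rp < 1 -> 0 < rm < 1 -> 0 < rp' < 1 -> 0 < rm' < 1 ->
     0 <= s1 < 2 * pi -> 0 <= s2 < 2 * pi ->
     0 <= s1' < 2 * pi -> 0 <= s2' < 2 * pi ->
     (unitary_equiv (Uparam rp rm s1 s2) (Uparam rp' rm' s1' s2')
      <-> [/\ rp = rp', rm = rm', s1 = s1' & s2 = s2']).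
Proof.
move=> hp hm hp' hm' h1 h2 h1' h2'; split; last first.
  case=> <- <- <- <-; exists 0, (fun _ => 1%:M); split.
    move=> n; rewrite /unitary2 /adjmx map_mx1 trmx1 mul1mx; by split.
  by move=> n m; rewrite expi0 scale1r mul1mx /adjmx map_mx1 trmx1 mulmx1.
move=> /inv_eq h.
have sp0 := sfun_gt0 hp; have sm0 := sfun_gt0 hm.
have sp0' := sfun_gt0 hp'; have sm0' := sfun_gt0 hm'.
have esp : sfun rp' = sfun rp.
  have := h 0 0; rewrite !tT0 !II1 => /rC_inj /eqP.
  rewrite eqrXn2 ?sqr_ge0 // eqrXn2 ?ltW // => /eqP //.
have esm : sfun rm' = sfun rm.
  have := h (-2) (-2); rewrite !tTm2 !II1 => /rC_inj /eqP.
  rewrite eqrXn2 ?sqr_ge0 // eqrXn2 ?ltW // => /eqP //.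
have K0 : sfun rp ^+ 2 * (sfun rp * sfun rm) != 0.
  by rewrite gt_eqF // !mulr_gt0 // exprn_gt0.
have K1 : sfun rp * sfun rm * sfun rm ^+ 2 != 0.
  by rewrite gt_eqF // !mulr_gt0 // exprn_gt0.
split.
- by apply: sfun_inj => //.
- by apply: sfun_inj => //.
- have := h 0 (-1); rewrite !tT0 !tTm1 !II2 esp esm => /(cancel_expi K0) e.
  by apply: expiN_inj => //.
- have := h (-1) (-2); rewrite !tTm1 !tTm2 !II3 esp esm => /(cancel_expi K1) e.
  apply: expiN_inj => //; rewrite -!conj_expi; by move: e; rewrite !opprK => ->.
Qed.

End L5.

Section L6.
Variable R : realType.
Local Notation C := R[i].
Variables (lam ap bp gp am bm gm : R).
Hypothesis hlam : lam + lam = bp + gm - bm.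

Definition s1v := gp - (lam + lam).
Definition s2v := gm - (lam + lam).
Definition th (k : int) : R :=
  if 0 <= k then k%:~R * (lam - ap) else (k + 1)%:~R * (lam - am) - (lam - ap).
Definition ph (k : int) : R :=
  if 0 <= k then th k + ap - bp else th k + am - bm + s2v.

Ltac solve_ang :=
  rewrite /ph /th /s1v /s2v; repeat (case: ifP => ?);
  try lia;
  try (have -> : k = 0 by lia);
  try (have -> : k = -1 by lia);
  rewrite ?intrD ?intrB ?intrN /=; lra.

Lemma A0p k : 0 <= k -> lam + th (k - 1) - th k - ap = - 0.
Proof. move=> hk; have hl := hlam; solve_ang. Qed.
Lemma A1p k : 0 <= k -> lam + th (k - 1) - ph k - bp = - 0.
Proof. move=> hk; have hl := hlam; solve_ang. Qed.
Lemma A0m k : k < 0 -> lam + th (k - 1) - th k - am = - 0.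
Proof. move=> hk; have hl := hlam; solve_ang. Qed.
Lemma A1m k : k < 0 -> lam + th (k - 1) - ph k - bm = - s2v.
Proof. move=> hk; have hl := hlam; solve_ang. Qed.
Lemma B0p k : 0 <= k -> lam + ph (k + 1) - th k - (gp - bp) = - s1v.
Proof. move=> hk; have hl := hlam; solve_ang. Qed.
Lemma B1p k : 0 <= k -> lam + ph (k + 1) - ph k - (gp - ap) = - s1v.
Proof. move=> hk; have hl := hlam; solve_ang. Qed.
Lemma B0m k : k < 0 -> lam + ph (k + 1) - th k - (gm - bm) = - 0.
Proof. move=> hk; have hl := hlam; solve_ang. Qed.
Lemma B1m k : k < 0 -> lam + ph (k + 1) - ph k - (gm - am) = - s2v.
Proof. move=> hk; have hl := hlam; solve_ang. Qed.

End L6.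

Section L7.
Variable R : realType.
Local Notation C := R[i].

Lemma keyeq (c Y : C) (l p q t u : R) : Y = c * expi u -> l + p - q - t = - u ->
  expi l * (expi p * 1) * conjc (expi q * (c * expi t)) = 1 * conjc Y.
Proof.
move=> -> h; rewrite !conjM !conj_expi mul1r.
transitivity (conjc c * expi (l + p + - q + - t)); first by rewrite !expiD; ring.
by rewrite h.
Qed.

Lemma zeroeq (X Y : C) (l p : R) : expi l * (expi p * 0) * conjc X = 0 * conjc Y.
Proof. by rewrite !mulr0 !mul0r. Qed.

Lemma phase_data (p q z1 z2 : 'cV[C]_2) : onb2 p q -> onb2 z1 z2 ->
  exists r a b g : R, [/\ 0 <= r <= 1, ip p z1 = rC r * expi a,
    ip q z1 = rC (sfun r) * expi b, ip p z2 = (- rC (sfun r)) * expi (g - b)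
    & ip q z2 = rC r * expi (g - a)].
Proof.
move=> hpq hz; have [i1 i2 i3 i4] := onb2_ip hz.
have := phase_nf (x := ip p z1) (y := ip q z1) (z1 := ip p z2) (z2 := ip q z2).
rewrite -!(parseval _ _ hpq) i1 i2 i3.
case=> // r [a [b [g [h0 h1 h2 h3 h4]]]].
exists r, a, b, g; split => //.
  by rewrite h3 expiD; ring.
by rewrite h4 expiD; ring.
Qed.

End L7.

Section L8.
Variable R : realType.
Local Notation C := R[i].

Lemma part1 (U : blockop R) : complete_two_phase U ->
     exists rp rm s1 s2 : R,
       [/\ 0 <= rp <= 1, 0 <= rm <= 1 & unitary_equiv U (Uparam rp rm s1 s2)].
Proof.
case=> _ [xi [zeta [xi1p [xi2p [zeta1p [zeta2p [xi1m [xi2m [zeta1m [zeta2m [[hxi [hze hU]] [hp hm]]]]]]]]]]]].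
have [oxp ozp] : onb2 xi1p xi2p /\ onb2 zeta1p zeta2p.
  have [f1 f2 f3 f4] := hp 0 (lexx 0).
  by split; [have := hxi 0 | have := hze 0]; rewrite ?f1 ?f2 ?f3 ?f4.
have [oxm ozm] : onb2 xi1m xi2m /\ onb2 zeta1m zeta2m.
  have [f1 f2 f3 f4] := hm (-1) (lexx _).
  by split; [have := hxi (-1) | have := hze (-1)]; rewrite ?f1 ?f2 ?f3 ?f4.
have [rp [ap [bp [gp [rp01 dp1 dp2 dp3 dp4]]]]] := phase_data oxp ozp.
have [rm [am [bm [gm [rm01 dm1 dm2 dm3 dm4]]]]] := phase_data oxm ozm.
have [lam hlam] : exists lam : R, lam + lam = bp + gm - bm.
  by exists ((bp + gm - bm) / 2); field.
exists rp, rm, (s1v lam gp), (s2v lam gm); split => //.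
exists lam, (fun k => Fm (expi (th lam ap am k)) (expi (ph lam ap bp am bm gm k))
                        (xi k (k + 1)) (xi k (k - 1))).
split.
  move=> n; apply: Fm_unitary; [exact: hxi | by rewrite conj_expi expiNK | by rewrite conj_expi expiNK].
move=> n m; rewrite hU.
case: (eqVneq n (m - 1)) => [-> | h1].
  rewrite /= UP_up ketbra_conj !Fm_mul scale_ketbra scale_vec2 subrK.
  have := hxi (m - 1); rewrite subrK => /onb2_ip [i1 _ _ i4].
  rewrite i1 i4 /e1.
  case: (lerP 0 m) => hm0.
    have [f1 f2 f3 f4] := hp m hm0.
    rewrite f1 f2 f3 dp1 dp2; apply: ketbra_eq.
    - by apply: (keyeq (u := 0)); [rewrite expi0 mulr1 | apply: (A0p _ _ hlam)].
    - by apply: (keyeq (u := 0)); [rewrite expi0 mulr1 | apply: (A1p _ _ hlam)].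
    - exact: zeroeq.
    - exact: zeroeq.
  have [f1 f2 f3 f4] : _ := hm m (ltac:(lia)).
  rewrite f1 f2 f3 dm1 dm2; apply: ketbra_eq.
  - by apply: (keyeq (u := 0)); [rewrite expi0 mulr1 | apply: (A0m _ _ hlam)].
  - by apply: (keyeq (u := s2v lam gm)); [rewrite mulrC | apply: (A1m _ _ hlam)].
  - exact: zeroeq.
  - exact: zeroeq.
case: (eqVneq n (m + 1)) => [-> | h2].
  rewrite /= UP_dn ketbra_conj !Fm_mul scale_ketbra scale_vec2 addrK.
  have := hxi (m + 1); rewrite addrK => /onb2_ip [_ i2 i3 _].
  rewrite i2 i3 /e2.
  case: (lerP 0 m) => hm0.
    have [f1 f2 f3 f4] := hp m hm0.
    rewrite f1 f2 f4 dp3 dp4; apply: ketbra_eq.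
    - exact: zeroeq.
    - exact: zeroeq.
    - by apply: (keyeq (u := s1v lam gp)); [rewrite mulNr mulrC | apply: (B0p _ _ _ hlam)].
    - by apply: (keyeq (u := s1v lam gp)); [rewrite mulrC | apply: (B1p _ _ _ hlam)].
  have [f1 f2 f3 f4] : _ := hm m (ltac:(lia)).
  rewrite f1 f2 f4 dm3 dm4; apply: ketbra_eq.
  - exact: zeroeq.
  - exact: zeroeq.
  - by apply: (keyeq (u := 0)); [rewrite expi0 mulr1 | apply: (B0m _ _ hlam)].
  - by apply: (keyeq (u := s2v lam gm)); [rewrite mulrC | apply: (B1m _ _ hlam)].
rewrite /Uparam (negbTE h1) (negbTE h2).
by rewrite mulmx0 mul0mx scaler0.
Qed.

End L8.

Unset Implicit Arguments.

Theorem theorem2p12 (R : realType) :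
  (forall U : blockop R, complete_two_phase U ->
     exists rp rm s1 s2 : R,
       [/\ 0 <= rp <= 1, 0 <= rm <= 1 & unitary_equiv U (Uparam rp rm s1 s2)])
  /\
  (forall rp rm s1 s2 rp' rm' s1' s2' : R,
     0 < rp < 1 -> 0 < rm < 1 -> 0 < rp' < 1 -> 0 < rm' < 1 ->
     0 <= s1 < 2 * pi -> 0 <= s2 < 2 * pi ->
     0 <= s1' < 2 * pi -> 0 <= s2' < 2 * pi ->
     (unitary_equiv (Uparam rp rm s1 s2) (Uparam rp' rm' s1' s2')
      <-> [/\ rp = rp', rm = rm', s1 = s1' & s2 = s2'])).
Proof.
split.
  by move=> U hU; apply: part1.
by move=> *; apply: part2.
Qed.
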